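(* Fix $p\in[1,\infty]$ and write $\|\cdot\|$ for the induced $\ell_p$ operator norm of matrices. Let $W^{(l)}\in\mathbb{R}^{n_l\times n_{l-1}}$ for $l=1,\dots,L$ and let $0\le\alpha^{(l)}\le\beta^{(l)}$ (elementwise) be vectors in $\mathbb{R}^{n_l}$ for $l=1,\dots,L-1$ (the slope bounds of the activations of an $L$-layer network $z^{(l)}=W^{(l)}a^{(l-1)}$, $a^{(l)}=\sigma^{(l)}(z^{(l)})$, $f=z^{(L)}$). Given loop-transformation vectors $d^{(l)}\in\mathbb{R}^{n_l}$, $l=1,\dots,L-1$, set $D^{(l)}=\mathrm{diag}(d^{(l)})$, $D'^{(l)}=\mathrm{diag}(\beta^{(l)}-d^{(l)})$ for $l\le L-1$, $D'^{(L)}=I$, and define $m^{(1)}=\|D'^{(1)}W^{(1)}\|$ and for $l=2,\dots,L$ $$m^{(l)}=\Big\|D'^{(l)}W^{(l)}\prod_{i=1}^{l-1}D^{(i)}W^{(i)}\Big\|+\sum_{j=1}^{l-1}\Big\|D'^{(l)}W^{(l)}\prod_{i=j+1}^{l-1}D^{(i)}W^{(i)}\Big\|\,m^{(j)}$$ (products ordered with the highest index on the left; empty product is the identity). Let $m^{(L)}(\mathcal{D})$ denote $m^{(L)}$ obtained with $d^{(l)}=\beta^{(l)}/2$ for all $l=1,\dots,L-1$, and $m^{(L)}(0)$ denote $m^{(L)}$ obtained with $d^{(l)}=0$ for all $l$ (the naive bound). Then $m^{(L)}(\mathcal{D})\le m^{(L)}(0)$. *)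

(* Defs.v *)
From HB Require Import structures.
From mathcomp Require Import all_boot all_order all_algebra.
From mathcomp Require Import all_classical all_reals.
From mathcomp Require Import ereal exp.
Set Implicit Arguments. Unset Strict Implicit. Unset Printing Implicit Defensive.
Import Order.TTheory GRing.Theory Num.Theory.
Local Open Scope ring_scope.
Local Open Scope classical_set_scope.

Section Defs.
Variable R : realType.

Definition lpnorm (p : \bar R) {k : nat} (x : 'cV[R]_k) : R :=
  match p with
  | +oo%E => \big[Num.max/0]_(i < k) `|x i 0|
  | r%:E => (\sum_(i < k) `|x i 0| `^ r) `^ r^-1
  | -oo%E => 0
  end.

Definition opnorm (p : \bar R) {a b : nat} (A : 'M[R]_(a, b)) : R :=
  sup [set lpnorm p (A *m x) | x in [set x : 'cV[R]_b | lpnorm p x <= 1]].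

Variables (p : \bar R) (L : nat) (n : nat -> nat).
Variable W : forall l : nat, 'M[R]_(n l, n l.-1).
Variable beta : forall l : nat, 'rV[R]_(n l).
Variable d : forall l : nat, 'rV[R]_(n l).

Definition idc (a b : nat) : 'M[R]_(n a, n b) :=
  \matrix_(i, k) ((a == b) && (i == k :> nat))%:R.

Definition Dm (l : nat) : 'M[R]_(n l) := diag_mx (d l).
Definition Dp (l : nat) : 'M[R]_(n l) :=
  if (l < L)%N then diag_mx (beta l - d l) else 1%:M.

(* Pfrom s j = D^(s) W^(s) ... D^(j+1) W^(j+1)  (identity if s = j) *)
Fixpoint Pfrom (s j : nat) : 'M[R]_(n s, n j) :=
  match s with
  | 0 => idc 0 j
  | s'.+1 => if j == s'.+1 then idc s'.+1 j
             else (Dm s'.+1 *m W s'.+1) *m Pfrom s' j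
  end.

(* value of m^(s+1) given previous values m^(1..s) *)
Definition mstep (s : nat) (prev : nat -> R) : R :=
  opnorm p (Dp s.+1 *m W s.+1 *m Pfrom s 0)
  + \sum_(1 <= j < s.+1) opnorm p (Dp s.+1 *m W s.+1 *m Pfrom s j) * prev j.

Fixpoint mtab (s : nat) : nat -> R :=
  match s with
  | 0 => fun _ => 0
  | s'.+1 => let prev := mtab s' in
             fun j => if j == s'.+1 then mstep s' prev else prev j
  end.

Definition mbound (l : nat) : R := mtab l l.
End Defs.

(* Main.v *)
Require Import Defs.
From HB Require Import structures.
From mathcomp Require Import all_boot all_order all_algebra.
From mathcomp Require Import all_classical all_reals.
From mathcomp Require Import ereal exp.
From mathcomp Require Import ring lra.
Import Order.TTheory GRing.Theory Num.Theory.
Local Open Scope ring_scope.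
Set Implicit Arguments. Unset Strict Implicit.

Section Norms.
Variables (R : realType) (p : \bar R).
Hypothesis hp : (1 <= p)%E.

Lemma lp_ge0 k (x : 'cV[R]_k) : 0 <= lpnorm p x.
Proof.
case: p hp => [r| |] //= _; first exact: powR_ge0.
apply: (big_ind (fun v => 0 <= v)) => // a b ha hb.
by rewrite le_max ha.
Qed.

Lemma lp_coord k (x : 'cV[R]_k) i : `|x i 0| <= lpnorm p x.
Proof.
case: p hp => [r| |] //= h.
  have r1 : 1 <= r by rewrite -lee_fin.
  have r0 : r != 0 by apply: lt0r_neq0; apply: lt_le_trans r1.
  rewrite -[X in X <= _](@powRr1 _ `|x i 0|) // -(mulfV r0) powRrM.
  apply: ge0_ler_powR; rewrite ?nnegrE ?invr_ge0 ?powR_ge0 ?sumr_ge0 //.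
    by apply: le_trans r1.
  by rewrite (bigD1 i) //= lerDl sumr_ge0 // => j _; rewrite powR_ge0.
by rewrite (bigD1 i) //= le_max lexx.
Qed.

Lemma lp_scale k c (x : 'cV[R]_k) : lpnorm p (c *: x) <= `|c| * lpnorm p x.
Proof.
case: p hp => [r| |] //= h.
  have r1 : 1 <= r by rewrite -lee_fin.
  have r0 : r != 0 by apply: lt0r_neq0; apply: lt_le_trans r1.
  under eq_bigr => i _ do rewrite mxE normrM (powRM _ (normr_ge0 _) (normr_ge0 _)).
  have S0 : 0 <= \sum_(i < k) `|x i 0| `^ r by rewrite sumr_ge0 // => j _; rewrite powR_ge0.
  rewrite -mulr_sumr (powRM _ (powR_ge0 _ _) S0).
  by rewrite -powRrM mulfV // powRr1.
apply: (big_ind (fun v => v <= `|c| * _)).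
- rewrite mulr_ge0 //; apply: (big_ind (fun v => 0 <= v)) => // a b ha hb.
  by rewrite le_max ha.
- by move=> a b ha hb; rewrite ge_max ha hb.
move=> i _; rewrite mxE normrM ler_wpM2l //.
by rewrite (bigD1 i) //= le_max lexx.
Qed.

Lemma lp0 k : lpnorm p (0 : 'cV[R]_k) = 0.
Proof.
have := lp_scale 0 (0 : 'cV[R]_k); rewrite scale0r normr0 mul0r => h.
by apply/le_anti; rewrite h lp_ge0.
Qed.

Lemma lp_bnd k C : 0 <= C -> exists B, forall x : 'cV[R]_k,
  (forall i, `|x i 0| <= C) -> lpnorm p x <= B.
Proof.
move=> C0; case: p hp => [r| |] //= h.
  have r1 : 1 <= r by rewrite -lee_fin.
  have r0' : 0 <= r by apply: le_trans r1.
  exists ((C `^ r *+ k) `^ r^-1) => x hx.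
  have S0 : 0 <= \sum_(i < k) `|x i 0| `^ r by rewrite sumr_ge0 // => j _; rewrite powR_ge0.
  apply: ge0_ler_powR; rewrite ?nnegrE ?invr_ge0 ?mulrn_wge0 ?powR_ge0 //.
  rewrite -[k in _ *+ k]card_ord -sumr_const ler_sum // => i _.
  by apply: ge0_ler_powR; rewrite ?nnegrE.
exists C => x hx.
by apply: (big_ind (fun v => v <= C)) => // a b ha hb; rewrite ge_max ha hb.
Qed.

Lemma mat_bnd a b (A : 'M[R]_(a, b)) : exists B, forall x : 'cV[R]_b,
  lpnorm p x <= 1 -> lpnorm p (A *m x) <= B.
Proof.
pose C := \sum_i \sum_j `|A i j|.
have C0 : 0 <= C by rewrite sumr_ge0 // => i _; rewrite sumr_ge0.
have [B hB] := lp_bnd a C0.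
exists B => x hx; apply: hB => i; rewrite mxE.
apply: le_trans (ler_norm_sum _ _ _) _.
apply: (@le_trans _ _ (\sum_j `|A i j|)).
  apply: ler_sum => j _; rewrite normrM -[X in _ <= X]mulr1 ler_wpM2l //.
  exact: le_trans (lp_coord x j) hx.
by rewrite /C (bigD1 i) //= lerDl sumr_ge0 // => i' _; rewrite sumr_ge0.
Qed.

Definition Sset a b (A : 'M[R]_(a, b)) :=
  image [set x : 'cV[R]_b | lpnorm p x <= 1] (fun x : 'cV[R]_b => lpnorm p (A *m x)).

Lemma Sset_sup a b (A : 'M[R]_(a, b)) : has_sup (Sset A).
Proof.
split.
  by exists 0; exists 0 => /=; rewrite ?lp0 ?ler01 // mulmx0 lp0.
have [B hB] := mat_bnd A.
by exists B => y [x hx <-]; apply: hB.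
Qed.

Lemma op_ub a b (A : 'M[R]_(a, b)) x : lpnorm p x <= 1 -> lpnorm p (A *m x) <= opnorm p A.
Proof. by move=> hx; apply: (sup_upper_bound (Sset_sup A)); exists x. Qed.

Lemma op_ge0 a b (A : 'M[R]_(a, b)) : 0 <= opnorm p A.
Proof.
have h := @op_ub _ _ A 0; rewrite mulmx0 !lp0 in h; exact: h ler01.
Qed.

Lemma op_le a b (A : 'M[R]_(a, b)) B0 :
  (forall x, lpnorm p x <= 1 -> lpnorm p (A *m x) <= B0) -> opnorm p A <= B0.
Proof.
move=> h; apply: ge_sup; first exact: (Sset_sup A).1.
by move=> _ [x hx <-]; apply: h.
Qed.

Lemma op_vec a b (A : 'M[R]_(a, b)) y : lpnorm p (A *m y) <= opnorm p A * lpnorm p y.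
Proof.
have [h0|hpos] := eqVneq (lpnorm p y) 0.
  have -> : y = 0.
    apply/matrixP => i j; rewrite (ord1 j) mxE; apply/normr0_eq0/le_anti.
    by rewrite normr_ge0 -h0 lp_coord.
  by rewrite mulmx0 lp0 mulr_ge0 ?op_ge0 ?lp_ge0.
set t := lpnorm p y in hpos *.
have tp : 0 < t by rewrite lt0r hpos lp_ge0.
have -> : y = t *: (t^-1 *: y) by rewrite scalerA mulfV // scale1r.
rewrite -scalemxAr.
apply: le_trans (lp_scale _ _) _.
rewrite (ger0_norm (ltW tp)) mulrC ler_pM2r //.
apply: op_ub; apply: le_trans (lp_scale _ _) _.
by rewrite ger0_norm ?invr_ge0 ?(ltW tp) // mulVf.
Qed.

Lemma op_mul a b c (A : 'M[R]_(a, b)) (B : 'M[R]_(b, c)) :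
  opnorm p (A *m B) <= opnorm p A * opnorm p B.
Proof.
apply: op_le => x hx; rewrite -mulmxA.
apply: le_trans (op_vec _ _) _; apply: ler_wpM2l; first exact: op_ge0.
apply: le_trans (op_vec _ _) _.
by rewrite -[X in _ <= X]mulr1 ler_wpM2l // op_ge0.
Qed.

Lemma op_scale a b c (A : 'M[R]_(a, b)) : opnorm p (c *: A) <= `|c| * opnorm p A.
Proof.
apply: op_le => x hx; rewrite -scalemxAl.
apply: le_trans (lp_scale _ _) _.
by rewrite ler_wpM2l // op_ub.
Qed.

Lemma op_one k : opnorm p (1%:M : 'M[R]_k) <= 1.
Proof. by apply: op_le => x hx; rewrite mul1mx. Qed.

Variables (L : nat) (n : nat -> nat) (W : forall l : nat, 'M[R]_(n l, n l.-1))
  (beta : forall l : nat, 'rV[R]_(n l)).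

Lemma mulle (x y z : R) : 0 <= x -> y <= z -> x * y <= x * z.
Proof. by move=> h0 h; rewrite ler_wpM2l. Qed.

Lemma mulle_r (x y z : R) : 0 <= x -> y <= z -> y * x <= z * x.
Proof. by move=> h0 h; rewrite ler_wpM2r. Qed.

Lemma eqle (x y : R) : x = y -> x <= y. Proof. by move=> ->. Qed.

Definition dD := fun l => 2^-1 *: beta l.
Definition d0 := fun l : nat => (0 : 'rV[R]_(n l)).
Definition Bp i := diag_mx (beta i) *m W i.
Definition Gp i := opnorm p (Bp i).
Definition F s := \prod_(1 <= i < s.+1) Gp i.

Lemma F_ge0 s : 0 <= F s.
Proof. by apply: prodr_ge0 => i _; apply: op_ge0. Qed.

Lemma F_S s : F s.+1 = F s * Gp s.+1.
Proof. by rewrite /F big_nat_recr. Qed.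

Lemma F0 : F 0 = 1.
Proof. by rewrite /F big_geq. Qed.

Lemma idc_id s : idc R n s s = 1%:M.
Proof.
by apply/matrixP => i j; rewrite !mxE eqxx /=.
Qed.

Lemma Pfrom_diag d s : Pfrom W d s s = idc R n s s.
Proof. by case: s => //= s; rewrite eqxx. Qed.

Lemma Pfrom_step d s j : j != s.+1 ->
  Pfrom W d s.+1 j = (Dm d s.+1 *m W s.+1) *m Pfrom W d s j.
Proof. by move=> h /=; rewrite (negbTE h). Qed.

Lemma diag_scale k c (v : 'rV[R]_k) : diag_mx (c *: v) = c *: diag_mx v.
Proof.
apply/matrixP => i j; rewrite !mxE; case: (i == j) => /=.
  by rewrite !mulr1n.
by rewrite !mulr0n mulr0.
Qed.

Lemma DmW_half s : Dm dD s *m W s = 2^-1 *: Bp s.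
Proof. by rewrite /Dm /dD diag_scale -scalemxAl. Qed.

Lemma half_ge0 : (0 : R) <= 2^-1.
Proof. by rewrite invr_ge0. Qed.

Lemma Pbound s j : (j <= s)%N ->
  opnorm p (Pfrom W dD s j) * F j <= (2^-1)^+(s - j) * F s.
Proof.
have diagcase : forall j, opnorm p (Pfrom W dD j j) * F j <= (2^-1)^+(j - j) * F j.
  move=> k; rewrite Pfrom_diag idc_id subnn expr0 mul1r.
  by rewrite -[X in _ <= X]mul1r ler_wpM2r ?F_ge0 // op_one.
elim: s j => [|s IH] j hj.
  by move: hj; rewrite leqn0 => /eqP ->; apply: diagcase.
have [->|ne] := eqVneq j s.+1; first exact: diagcase.
have hjs : (j <= s)%N by rewrite -ltnS ltn_neqAle ne hj.
rewrite Pfrom_step // DmW_half.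
apply: (@le_trans _ _ ((2^-1 * Gp s.+1) * opnorm p (Pfrom W dD s j) * F j)).
  apply: ler_wpM2r; first exact: F_ge0.
  apply: le_trans (op_mul _ _) _; apply: ler_wpM2r; first exact: op_ge0.
  by apply: le_trans (op_scale _ _) _; rewrite ger0_norm ?half_ge0.
rewrite -mulrA.
apply: (@le_trans _ _ ((2^-1 * Gp s.+1) * ((2^-1)^+(s - j) * F s))).
  apply: ler_wpM2l; last exact: IH.
  by rewrite mulr_ge0 ?half_ge0 ?op_ge0.
by rewrite subSn // exprS F_S; apply: eqle; ring.
Qed.

Lemma mtab_stable d s j : (j <= s)%N -> (0 < j)%N ->
  mtab p L W beta d s j = mbound p L W beta d j.
Proof.
elim: s => [|s IH] hj hj0; first by move: hj; rewrite leqn0 => /eqP h; rewrite h in hj0.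
rewrite /=; case: eqP => [->|ne]; first by rewrite /mbound /= eqxx.
apply: IH => //; by rewrite -ltnS ltn_neqAle hj andbT; apply/eqP.
Qed.

Lemma mbound_S d s : mbound p L W beta d s.+1 =
  opnorm p (Dp L beta d s.+1 *m W s.+1 *m Pfrom W d s 0)
  + \sum_(1 <= j < s.+1) opnorm p (Dp L beta d s.+1 *m W s.+1 *m Pfrom W d s j)
      * mbound p L W beta d j.
Proof.
rewrite /mbound /= eqxx /mstep; congr (_ + _).
by apply: eq_big_nat => j /andP[j1 js]; rewrite mtab_stable // -ltnS.
Qed.

Lemma mtab_ge0 d s j : 0 <= mtab p L W beta d s j.
Proof.
elim: s j => [|s IH] j //=; case: eqP => _ //.
rewrite /mstep addr_ge0 ?op_ge0 // sumr_ge0 // => i _.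
by rewrite mulr_ge0 ?op_ge0.
Qed.

Lemma mbound_ge0 d s : 0 <= mbound p L W beta d s.
Proof. exact: mtab_ge0. Qed.

Lemma M_step_low d s :
  opnorm p (Dp L beta d s.+1 *m W s.+1) * (if s is 0 then 1 else mbound p L W beta d s)
  <= mbound p L W beta d s.+1.
Proof.
rewrite mbound_S; case: s => [|s].
  by rewrite big_geq // addr0 mulr1 Pfrom_diag idc_id mulmx1.
rewrite big_nat_recr // Pfrom_diag idc_id mulmx1.
rewrite addrA ler_wpDl // addr_ge0 ?op_ge0 // sumr_ge0 // => i _.
by rewrite mulr_ge0 ?op_ge0 ?mbound_ge0.
Qed.

Lemma Dp0_eq l : (l < L)%N -> Dp L beta d0 l = diag_mx (beta l).
Proof. by move=> h; rewrite /Dp h /d0 subr0. Qed.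

Lemma DpD l : Dp L beta dD l = (if (l < L)%N then 2^-1 else 1) *: Dp L beta d0 l.
Proof.
rewrite /Dp; case: ifP => _; last by rewrite scale1r.
rewrite /dD /d0 subr0 -diag_scale; congr diag_mx.
rewrite -{1}(scale1r (beta l)) -scalerBl; congr (_ *: _).
by field.
Qed.

Lemma M0_low s : (s < L)%N -> F s <= (if s is 0 then 1 else mbound p L W beta d0 s).
Proof.
elim: s => [|s IH] hs; first by rewrite F0.
apply: le_trans (M_step_low _ _); rewrite Dp0_eq // -/(Bp s.+1) -/(Gp s.+1).
rewrite F_S mulrC ler_wpM2l ?op_ge0 //; apply: IH; exact: ltnW.
Qed.

Lemma geo s : \sum_(1 <= j < s.+1) 2^-1 * (2^-1)^+(s - j) = 1 - (2^-1)^+s :> R.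
Proof.
elim: s => [|s IH]; first by rewrite big_geq // expr0 subrr.
rewrite big_nat_recr //= subnn expr0 mulr1.
rewrite (eq_big_nat _ _ (F2 := fun j => 2^-1 * (2^-1 * (2^-1)^+(s - j)))); last first.
  by move=> j /andP[_ hj]; rewrite subSn // exprS.
rewrite -mulr_sumr IH exprS.
have h2 : (2^-1 + 2^-1 : R) = 1 by field.
rewrite mulrBr mulr1 addrC addrA h2 //.
Qed.

Lemma MD_up s : (s.+1 <= L)%N ->
  (forall j, (0 < j)%N -> (j <= s)%N -> mbound p L W beta dD j <= 2^-1 * F j) ->
  mbound p L W beta dD s.+1 <= opnorm p (Dp L beta dD s.+1 *m W s.+1) * F s.
Proof.
move=> hsL IH; rewrite mbound_S.
set H := opnorm p (Dp L beta dD s.+1 *m W s.+1).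
have H0 : 0 <= H by apply: op_ge0.
apply: (@le_trans _ _ (H * F s * (2^-1)^+s +
   \sum_(1 <= j < s.+1) H * F s * (2^-1 * (2^-1)^+(s - j)))).
  apply: lerD.
    apply: le_trans (op_mul _ _) _.
    have := Pbound (leq0n s); rewrite F0 mulr1 subn0 => hb.
    rewrite -mulrA [F s * _]mulrC; exact: mulle (op_ge0 _) hb.
  apply: ler_sum_nat => j /andP[j1 js].
  have hjs : (j <= s)%N by rewrite -ltnS.
  apply: (@le_trans _ _ (H * opnorm p (Pfrom W dD s j) * (2^-1 * F j))).
    apply: le_trans (ler_wpM2r (mbound_ge0 _ _) (op_mul _ _)) _.
    apply: mulle; first by rewrite mulr_ge0 ?op_ge0.
    exact: IH.
  have := Pbound hjs => hb.
  apply: (@le_trans _ _ (H * 2^-1 * ((2^-1)^+(s - j) * F s))); last by apply: eqle; ring.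
  apply: (@le_trans _ _ ((H * 2^-1) * (opnorm p (Pfrom W dD s j) * F j))).
    by apply: eqle; ring.
  by apply: mulle => //; rewrite mulr_ge0 ?half_ge0.
rewrite -mulr_sumr geo -mulrDr addrC subrK mulr1 //.
Qed.

Lemma MD_half k : forall l, (0 < l)%N -> (l <= k)%N -> (l < L)%N ->
  mbound p L W beta dD l <= 2^-1 * F l.
Proof.
elim: k => [|k IH] [|s] //= _ hl hL.
apply: le_trans (MD_up (ltnW hL) _) _.
  move=> j j0 js; apply: IH => //.
    exact: leq_trans js hl.
  exact: leq_ltn_trans js (ltnW hL).
rewrite DpD hL -scalemxAl Dp0_eq // -/(Bp s.+1).
apply: (@le_trans _ _ ((2^-1 * Gp s.+1) * F s)); last by apply: eqle; rewrite F_S; ring.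
apply: mulle_r; first exact: F_ge0.
by apply: le_trans (op_scale _ _) _; rewrite ger0_norm ?half_ge0.
Qed.

End Norms.

Theorem proposition1 (R : realType) (p : \bar R) (L : nat) (n : nat -> nat)
  (W : forall l : nat, 'M[R]_(n l, n l.-1))
  (alpha beta : forall l : nat, 'rV[R]_(n l))
  (hp : (1 <= p)%E) (hL : (0 < L)%N)
  (hab : forall l : nat, (1 <= l < L)%N ->
         forall i : 'I_(n l), 0 <= alpha l 0 i /\ alpha l 0 i <= beta l 0 i) :
  mbound p L W beta (fun l => 2^-1 *: beta l) L
  <= mbound p L W beta (fun l => 0) L.
Proof.
case: L hL hab => [//|s] _ _.
apply: le_trans (MD_up hp (leqnn s.+1) _) _.
  move=> j j0 js; apply: (@MD_half _ _ hp _ _ _ _ j) => //.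
rewrite DpD ltnn scale1r.
apply: le_trans _ (M_step_low hp s.+1 W beta (@d0 R n) s).
apply: mulle; first exact: op_ge0.
by have := M0_low hp W beta (ltnSn s); apply.
Qed.
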